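(* Let $X$ be an $\mathcal M$-set, let $A,B\subset\omega$ be co-infinite, and let $x\in X$ be supported on both $A$ and $B$. Then $x$ is supported on $A\cap B$.
   Context: $\omega=\{1,2,3,\dots\}$, $\mathcal M$ is the monoid of injective maps $\omega\to\omega$, and an $\mathcal M$-set is a set with a left $\mathcal M$-action. For $A\subset\omega$, $\mathcal M_A$ is the submonoid of injections fixing $A$ elementwise; $x\in X$ is supported on $A$ if $f.x=x$ for all $f\in\mathcal M_A$. A set $A\subset\omega$ is co-infinite if $\omega\setminus A$ is infinite. *)

(* Defs.v *)
From Stdlib Require Import Arith.

Definition omega : Type := { n : nat | 0 < n }.

Definition injective {A B : Type} (f : A -> B) : Prop :=
  forall x y, f x = f y -> x = y.

(* M = monoid of injective maps omega -> omega, composition as product,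
   identity as unit. The action is given on all functions but only
   its values on injective maps are constrained/used. *)
Record MSet := {
  carrier :> Type;
  act : (omega -> omega) -> carrier -> carrier;
  act_id : forall x, act (fun n => n) x = x;
  act_comp : forall f g x, injective f -> injective g ->
      act (fun n => f (g n)) x = act f (act g x)
}.

Definition co_infinite (A : omega -> Prop) : Prop :=
  forall m : nat, exists a : omega, ~ A a /\ m <= proj1_sig a.

Definition supported_on (X : MSet) (A : omega -> Prop) (x : X) : Prop :=
  forall f : omega -> omega, injective f -> (forall a, A a -> f a = a) ->
    act X f x = x.

(* Main.v *)
Require Import Defs.
From Stdlib Require Import Arith Lia List FinFun ClassicalEpsilon Classical FunctionalExtensionality.

Definition cc (a : omega) : nat := proj1_sig a.

Lemma cc_inj : forall a b : omega, cc a = cc b -> a = b.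
Proof.
  intros [a Ha] [b Hb]; unfold cc; simpl; intros ->.
  f_equal. apply Peano_dec.le_unique.
Qed.

Fixpoint cnt (Q : nat -> Prop) (n : nat) : nat :=
  match n with
  | 0 => 0
  | S k => cnt Q k + (if excluded_middle_informative (Q k) then 1 else 0)
  end.

Lemma cnt_mono Q : forall m n, m <= n -> cnt Q m <= cnt Q n.
Proof.
  intros m n H. induction H. lia. simpl.
  destruct (excluded_middle_informative (Q m0)); lia.
Qed.

Lemma cnt_le Q n : cnt Q n <= n.
Proof. induction n; simpl; [lia|]. destruct (excluded_middle_informative (Q n)); lia. Qed.

Lemma cnt_strict Q p q : Q p -> p < q -> cnt Q p < cnt Q q.
Proof.
  intros Hp Hpq. apply Nat.lt_le_trans with (cnt Q (S p)).
  - simpl. destruct (excluded_middle_informative (Q p)); [lia|contradiction].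
  - apply cnt_mono; lia.
Qed.

Lemma cnt_inj Q p q : Q p -> Q q -> cnt Q p = cnt Q q -> p = q.
Proof.
  intros Hp Hq He.
  destruct (Nat.lt_trichotomy p q) as [H|[H|H]]; auto.
  - pose proof (cnt_strict Q p q Hp H). lia.
  - pose proof (cnt_strict Q q p Hq H). lia.
Qed.

Lemma cnt_ivt Q n : forall m, S n <= cnt Q m -> exists k, k < m /\ Q k /\ cnt Q k = n.
Proof.
  induction m; simpl; intros H. lia.
  destruct (excluded_middle_informative (Q m)) as [Hq|Hq].
  - destruct (le_lt_dec (S n) (cnt Q m)) as [H'|H'].
    + destruct (IHm H') as [k [? [? ?]]]. exists k; repeat split; auto; lia.
    + exists m; repeat split; auto; lia.
  - rewrite Nat.add_0_r in H. destruct (IHm H) as [k [? [? ?]]].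
    exists k; repeat split; auto; lia.
Qed.

Definition Pn (P : omega -> Prop) (k : nat) : Prop := exists a, cc a = k /\ P a.
Definition cntO P (a : omega) := cnt (Pn P) (cc a).
Definition unbounded (P : omega -> Prop) := forall m, exists a, P a /\ m <= cc a.

Lemma unb_mono (P Q : omega -> Prop) : (forall a, P a -> Q a) -> unbounded P -> unbounded Q.
Proof. intros H HP m. destruct (HP m) as [a [? ?]]. exists a; auto. Qed.

Lemma cntO_inj P a b : P a -> P b -> cntO P a = cntO P b -> a = b.
Proof.
  intros. apply cc_inj. apply (cnt_inj (Pn P)); [exists a|exists b|]; auto.
Qed.

Lemma cntO_unb P : unbounded P -> forall n, exists m, n <= cnt (Pn P) m.
Proof.
  intros H. induction n. exists 0; lia.
  destruct IHn as [m Hm]. destruct (H m) as [a [Pa Ha]].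
  exists (S (cc a)). simpl.
  destruct (excluded_middle_informative (Pn P (cc a))) as [_|N];
    [|exfalso; apply N; exists a; auto].
  pose proof (cnt_mono (Pn P) _ _ Ha). lia.
Qed.

Lemma cntO_surj P : unbounded P -> forall n, exists a, P a /\ cntO P a = n.
Proof.
  intros H n. destruct (cntO_unb P H (S n)) as [m Hm].
  destruct (cnt_ivt _ _ _ Hm) as [k [_ [[a [Ha Pa]] Hk]]].
  exists a. split; auto. unfold cntO. rewrite Ha. auto.
Qed.

Definition one : omega := exist _ 1 (Nat.lt_0_1).
Definition enO (P : omega -> Prop) (n : nat) : omega :=
  epsilon (inhabits one) (fun a => P a /\ cntO P a = n).

Lemma enO_spec P : unbounded P -> forall n, P (enO P n) /\ cntO P (enO P n) = n.
Proof. intros. unfold enO. apply epsilon_spec. apply cntO_surj; auto. Qed.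

Lemma enO_cnt P : unbounded P -> forall a, P a -> enO P (cntO P a) = a.
Proof.
  intros. destruct (enO_spec P H (cntO P a)). apply cntO_inj with P; auto.
Qed.

Lemma enO_inj P : unbounded P -> forall n m, enO P n = enO P m -> n = m.
Proof.
  intros H n m E. destruct (enO_spec P H n) as [_ H1]; destruct (enO_spec P H m) as [_ H2].
  rewrite <- H1, <- H2, E. reflexivity.
Qed.

Lemma enO_ge P : unbounded P -> forall n, n <= cc (enO P n).
Proof.
  intros H n. destruct (enO_spec P H n) as [_ H1]. unfold cntO in H1.
  pose proof (cnt_le (Pn P) (cc (enO P n))). lia.
Qed.

Lemma inj_nat_unb (h : nat -> nat) : (forall x y, h x = h y -> x = y) ->
  forall m, exists n, m <= h n.
Proof.
  intros Hinj m. apply NNPP. intro N.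
  assert (Hall : forall n, h n < m).
  { intro n. destruct (le_lt_dec m (h n)); auto. exfalso; apply N; eauto. }
  assert (Hnd : NoDup (map h (seq 0 (S m)))).
  { apply Injective_map_NoDup; [exact Hinj | apply seq_NoDup]. }
  assert (Hincl : incl (map h (seq 0 (S m))) (seq 0 m)).
  { intros y Hy. apply in_map_iff in Hy. destruct Hy as [n [<- _]].
    apply in_seq. specialize (Hall n). lia. }
  pose proof (NoDup_incl_length Hnd Hincl) as H.
  rewrite length_map, !length_seq in H. lia.
Qed.

Lemma img_unb (f : omega -> omega) (D : omega -> Prop) : injective f -> unbounded D ->
  unbounded (fun z => exists d, D d /\ f d = z).
Proof.
  intros Hf HD m.
  destruct (inj_nat_unb (fun n => cc (f (enO D n)))) with m as [n Hn].
  { intros x y H. apply cc_inj in H. apply Hf in H. apply (enO_inj D HD) in H. auto. }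
  exists (f (enO D n)). split; auto. exists (enO D n). split; auto. apply enO_spec; auto.
Qed.

Definition Dc (A : omega -> Prop) := fun a => ~ A a.
Definition Ec (A : omega -> Prop) (f : omega -> omega) :=
  fun z => ~ exists a, A a /\ f a = z.
Definition tmap A f (y : omega) : omega :=
  if excluded_middle_informative (A y) then f y else enO (Ec A f) (cntO (Dc A) y).
Definition smap A f h (y : omega) : omega :=
  if excluded_middle_informative (A y) then y else enO (Dc A) (cntO (Ec A f) (h y)).

Lemma Ec_unb A f : co_infinite A -> injective f -> unbounded (Ec A f).
Proof.
  intros HA Hf m.
  destruct (img_unb f (Dc A) Hf HA m) as [z [[d [Hd <-]] Hm]].
  exists (f d); split; auto.
  intros [a [Ha Heq]]. apply Hf in Heq. subst. contradiction.
Qed.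

Lemma Lfac X A x f h : co_infinite A -> supported_on X A x -> injective f -> injective h ->
  (forall a, A a -> h a = f a) -> act X h x = act X (tmap A f) x.
Proof.
  intros HA Hx Hf Hh Hhf.
  assert (HD : unbounded (Dc A)) by exact HA.
  assert (HE : unbounded (Ec A f)) by (apply Ec_unb; auto).
  assert (HhE : forall y, ~ A y -> Ec A f (h y)).
  { intros y Hy [a [Ha Heq]]. rewrite <- Hhf in Heq by auto.
    apply Hh in Heq; subst; contradiction. }
  assert (Hcomp : (fun n => tmap A f (smap A f h n)) = h).
  { apply functional_extensionality; intro y. unfold smap.
    destruct (excluded_middle_informative (A y)) as [Ay|Ay].
    - unfold tmap. destruct (excluded_middle_informative (A y)); [symmetry; auto | contradiction].
    - destruct (enO_spec (Dc A) HD (cntO (Ec A f) (h y))) as [HD1 HD2].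
      unfold tmap. destruct (excluded_middle_informative (A _)) as [C1|_]; [contradiction|].
      rewrite HD2. apply enO_cnt; auto. }
  assert (Hsinj : injective (smap A f h)).
  { intros y1 y2. unfold smap.
    destruct (excluded_middle_informative (A y1)) as [A1|A1];
    destruct (excluded_middle_informative (A y2)) as [A2|A2]; intro Heq; auto.
    - exfalso. destruct (enO_spec (Dc A) HD (cntO (Ec A f) (h y2))) as [H1 _].
      rewrite <- Heq in H1. contradiction.
    - exfalso. destruct (enO_spec (Dc A) HD (cntO (Ec A f) (h y1))) as [H1 _].
      rewrite Heq in H1. contradiction.
    - apply enO_inj in Heq; auto. apply cntO_inj in Heq; auto. }
  assert (Htinj : injective (tmap A f)).
  { intros y1 y2. unfold tmap.
    destruct (excluded_middle_informative (A y1)) as [A1|A1];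
    destruct (excluded_middle_informative (A y2)) as [A2|A2]; intro Heq; auto.
    - exfalso. destruct (enO_spec (Ec A f) HE (cntO (Dc A) y2)) as [H1 _].
      apply H1. exists y1. auto.
    - exfalso. destruct (enO_spec (Ec A f) HE (cntO (Dc A) y1)) as [H1 _].
      apply H1. exists y2. auto.
    - apply enO_inj in Heq; auto. apply cntO_inj in Heq; auto. }
  transitivity (act X (fun n => tmap A f (smap A f h n)) x).
  { rewrite Hcomp; reflexivity. }
  rewrite (act_comp X (tmap A f) (smap A f h) x Htinj Hsinj).
  f_equal. apply Hx; auto. intros a Ha. unfold smap.
  destruct (excluded_middle_informative (A a)); [reflexivity|contradiction].
Qed.

Lemma Lagree X A x f g : co_infinite A -> supported_on X A x -> injective f -> injective g ->
  (forall a, A a -> f a = g a) -> act X f x = act X g x.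
Proof.
  intros. rewrite (Lfac X A x f f); auto. rewrite (Lfac X A x f g); auto.
  intros; symmetry; auto.
Qed.

Lemma constr X A B x f Y Xs : co_infinite A -> co_infinite B ->
  supported_on X A x -> supported_on X B x -> injective f ->
  (forall a, A a /\ B a -> f a = a) -> (forall a, Y a -> ~ B a) -> unbounded Y ->
  unbounded (fun a => ~ B a /\ ~ Y a) -> unbounded Xs ->
  (forall z, Xs z -> Ec A f z) -> (forall z, Xs z -> ~ Y z) -> act X f x = x.
Proof.
  intros HA HB HxA HxB Hf HfC HYB HY HW HX HXE HXY.
  set (W := fun a => ~ B a /\ ~ Y a) in *.
  set (g1 := fun y => if excluded_middle_informative (A y) then f y else enO Xs (cc y)).
  set (g2 := fun y => if excluded_middle_informative (B y) then
               (if excluded_middle_informative (A y) then y else enO Xs (cc y))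
             else enO Y (cc y)).
  set (g3 := fun y => if excluded_middle_informative (B y) then y else
               if excluded_middle_informative (A y) then enO Y (cc y) else enO W (cc y)).
  assert (I1 : injective g1).
  { intros y1 y2. unfold g1.
    destruct (excluded_middle_informative (A y1)) as [A1|A1];
    destruct (excluded_middle_informative (A y2)) as [A2|A2]; intro Heq; auto.
    - exfalso. destruct (enO_spec Xs HX (cc y2)) as [H1 _].
      apply (HXE _ H1). exists y1. auto.
    - exfalso. destruct (enO_spec Xs HX (cc y1)) as [H1 _].
      apply (HXE _ H1). exists y2. auto.
    - apply enO_inj in Heq; auto. apply cc_inj; auto. }
  assert (I2 : injective g2).
  { intros y1 y2. unfold g2.
    pose proof (enO_spec Xs HX (cc y1)) as [X1 _].
    pose proof (enO_spec Xs HX (cc y2)) as [X2 _].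
    pose proof (enO_spec Y HY (cc y1)) as [Y1 _].
    pose proof (enO_spec Y HY (cc y2)) as [Y2 _].
    destruct (excluded_middle_informative (B y1)) as [B1|B1];
    destruct (excluded_middle_informative (B y2)) as [B2|B2];
    destruct (excluded_middle_informative (A y1)) as [A1|A1];
    destruct (excluded_middle_informative (A y2)) as [A2|A2]; intro Heq; auto;
    try (apply enO_inj in Heq; auto; apply cc_inj; auto; fail);
    exfalso;
    first [ subst y1 | subst y2 | rewrite Heq in X1 | rewrite <- Heq in X2 ];
    match goal with
    | H : Y ?z, H' : B ?z |- _ => exact (HYB _ H H')
    | H : Xs ?z, H' : Y ?z |- _ => exact (HXY _ H H')
    | H : Xs ?z, H' : A ?z, H'' : B ?z |- _ =>
        apply (HXE _ H); exists z; split; [exact H' | apply HfC; split; assumption]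
    end. }
  assert (I3 : injective g3).
  { intros y1 y2. unfold g3.
    destruct (excluded_middle_informative (B y1)) as [B1|B1];
    destruct (excluded_middle_informative (B y2)) as [B2|B2];
    destruct (excluded_middle_informative (A y1)) as [A1|A1];
    destruct (excluded_middle_informative (A y2)) as [A2|A2]; intro Heq; auto;
    try (apply enO_inj in Heq; auto; apply cc_inj; auto; fail);
    try (exfalso; destruct (enO_spec Y HY (cc y2)) as [H1 _];
         rewrite <- Heq in H1; apply (HYB _ H1 B1); fail);
    try (exfalso; destruct (enO_spec W HW (cc y2)) as [[H1 _] _];
         rewrite <- Heq in H1; apply (H1 B1); fail);
    try (exfalso; destruct (enO_spec Y HY (cc y1)) as [H1 _];
         rewrite Heq in H1; apply (HYB _ H1 B2); fail);
    try (exfalso; destruct (enO_spec W HW (cc y1)) as [[H1 _] _];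
         rewrite Heq in H1; apply (H1 B2); fail);
    try (exfalso; destruct (enO_spec W HW (cc y2)) as [[_ H1] _];
         destruct (enO_spec Y HY (cc y1)) as [H2 _];
         rewrite <- Heq in H1; apply (H1 H2); fail);
    try (exfalso; destruct (enO_spec W HW (cc y1)) as [[_ H1] _];
         destruct (enO_spec Y HY (cc y2)) as [H2 _];
         rewrite Heq in H1; apply (H1 H2); fail). }
  transitivity (act X g1 x).
  { apply (Lagree X A); auto. intros a Ha. unfold g1.
    destruct (excluded_middle_informative (A a)); [reflexivity|contradiction]. }
  transitivity (act X g2 x).
  { apply (Lagree X B); auto. intros a Ha. unfold g1, g2.
    destruct (excluded_middle_informative (B a)); [|contradiction].
    destruct (excluded_middle_informative (A a)); auto. }
  transitivity (act X g3 x).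
  { apply (Lagree X A); auto. intros a Ha. unfold g2, g3.
    destruct (excluded_middle_informative (B a));
    destruct (excluded_middle_informative (A a)); first [reflexivity|contradiction]. }
  apply HxB; auto. intros a Ha. unfold g3.
  destruct (excluded_middle_informative (B a)); [reflexivity|contradiction].
Qed.

Theorem proposition1p4 (X : MSet) (A B : omega -> Prop) (x : X) :
  co_infinite A -> co_infinite B ->
  supported_on X A x -> supported_on X B x ->
  supported_on X (fun a => A a /\ B a) x.
Proof.
  intros HA HB HxA HxB f Hf HfC.
  assert (HU : unbounded (Dc B)) by exact HB.
  set (Y0 := fun a => ~ B a /\ Nat.even (cntO (Dc B) a) = true).
  set (Y1 := fun a => ~ B a /\ Nat.even (cntO (Dc B) a) = false).
  assert (HY0 : unbounded Y0).
  { intro m. exists (enO (Dc B) (0 + 2 * m)).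
    destruct (enO_spec (Dc B) HU (0 + 2 * m)) as [H1 H2].
    pose proof (enO_ge (Dc B) HU (0 + 2 * m)).
    split; [split; auto|lia]. rewrite H2, Nat.even_add_mul_2. reflexivity. }
  assert (HY1 : unbounded Y1).
  { intro m. exists (enO (Dc B) (1 + 2 * m)).
    destruct (enO_spec (Dc B) HU (1 + 2 * m)) as [H1 H2].
    pose proof (enO_ge (Dc B) HU (1 + 2 * m)).
    split; [split; auto|lia]. rewrite H2, Nat.even_add_mul_2. reflexivity. }
  assert (HE : unbounded (Ec A f)) by (apply Ec_unb; auto).
  destruct (classic (unbounded (fun z => Ec A f z /\ ~ Y0 z))) as [H0|H0].
  - apply (constr X A B x f Y0 (fun z => Ec A f z /\ ~ Y0 z)); auto.
    + intros a [? ?]; auto.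
    + apply (unb_mono Y1); auto. intros a [Ba Ea]. split; auto.
      intros [_ E0]. congruence.
    + intros z [? ?]; auto.
    + intros z [? ?]; auto.
  - apply (constr X A B x f Y1 (fun z => Ec A f z /\ ~ Y1 z)); auto.
    + intros a [? ?]; auto.
    + apply (unb_mono Y0); auto. intros a [Ba Ea]. split; auto.
      intros [_ E0]. congruence.
    + intro m. apply not_all_ex_not in H0. destruct H0 as [m0 Hm0].
      destruct (HE (Nat.max m m0)) as [a [Ea Ha]].
      exists a. split; [|lia]. split; auto.
      assert (Y0 a).
      { apply NNPP. intro N. apply Hm0. exists a. split; [split; auto|lia]. }
      intros [_ E1]. destruct H as [_ E0]. congruence.
    + intros z [? ?]; auto.
    + intros z [? ?]; auto.
Qed.
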